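(* Let $v\ge2$. An optimum $(d,2)$-CDA$((d+1)v^2;5,v)$ exists for every positive integer $d$ with $d+1\le v$, except possibly in the following cases: (1) $(d,v)\in\{(2,6),(4,6)\}$; (2) $v=6u$ and $d=v-2$, where $u\ne1$ and $\gcd(u,6)=1$.
   Context: Consecutive $t$-way interaction in an $N\times k$ array $A=(a_{ij})$ over a $v$-set $V$: $T=\{(i,x_i),\dots,(i+t-1,x_{i+t-1})\}$, $1\le i\le k-t+1$, $x_r\in V$; $\rho(A,T)=\{r: a_{r,j}=x_j\ \forall (j,x_j)\in T\}$, $\rho(A,\mathcal T)=\bigcup_{T\in\mathcal T}\rho(A,T)$. A $(d,t)$-CDA$(N;k,v)$ is an $N\times k$ array over $V$ in which every $t$ consecutive columns contain every $t$-tuple at least once, and such that for every set $\mathcal T$ of exactly $d$ distinct consecutive $t$-way interactions and every consecutive $t$-way interaction $T$: $\rho(A,T)\subseteq\rho(A,\mathcal T)$ iff $T\in\mathcal T$. It is optimum if $N=(d+1)v^t$. *)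

(* Defs.v *)
From mathcomp Require Import all_boot.
Set Implicit Arguments. Unset Strict Implicit. Unset Printing Implicit Defensive.

(* An N x k array over the v-set V = 'I_v (symbols 0..v-1); rows 'I_N, columns 'I_k
   (0-indexed, so column i of the paper is column i-1 here). *)
Definition array (N k v : nat) := 'I_N -> 'I_k -> 'I_v.

(* A consecutive t-way interaction: a starting column i with 0 <= i <= k - t
   (i.e. i : 'I_(k - t + 1)) together with the t values x_i, ..., x_{i+t-1}. *)
Definition cinter (k t v : nat) : finType := ('I_(k - t).+1 * t.-tuple 'I_v)%type.

Definition rho (N k v t : nat) (A : array N k v) (T : cinter k t v) : {set 'I_N} :=
  [set r : 'I_N | [forall j : 'I_t,
      [forall c : 'I_k, (val c == (val T.1 + val j)%N) ==> (A r c == tnth T.2 j)]]].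

Definition rhoS (N k v t : nat) (A : array N k v) (cT : {set cinter k t v}) : {set 'I_N} :=
  \bigcup_(T in cT) rho A T.

Definition is_CDA (d t N k v : nat) (A : array N k v) : Prop :=
  (forall T : cinter k t v, rho A T != set0) /\
  (forall (cT : {set cinter k t v}) (T : cinter k t v),
      #|cT| = d -> (rho A T \subset rhoS A cT) <-> T \in cT).

Definition is_optimum_CDA (d t N k v : nat) (A : array N k v) : Prop :=
  is_CDA d t A /\ N = (d.+1 * v ^ t)%N.

(* Main.v *)
Require Import Defs.
From mathcomp Require Import all_boot.
From mathcomp Require Import all_algebra.
Set Implicit Arguments. Unset Strict Implicit. Unset Printing Implicit Defensive.
Import GRing.Theory.

Section Constr.
Variables d w : nat.
Hypothesis dw : d <= w.

Definition SS := ('I_d.+1 * 'I_w.+1 * 'I_w.+1)%type.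
Definition sv (s : 'I_d.+1) : 'I_w.+1 := inord s.

Local Open Scope ring_scope.
Definition gg (c : nat) (z : SS) : 'I_w.+1 :=
  let: (s, x, y) := z in
  match c with 0%N => x | 1%N => y | 2%N => x + sv s | 3%N => y + sv s | _ => x + sv s + sv s end.
Local Close Scope ring_scope.

Lemma sv_inj : injective sv.
Proof.
have h : forall c : 'I_d.+1, (c < w.+1)%N.
  by move=> c; rewrite ltnS (leq_trans _ dw) // -ltnS.
move=> a b /(congr1 (@nat_of_ord _)); rewrite /sv !inordK ?h //.
by move=> e; apply: val_inj.
Qed.

Lemma cardS : #|{: SS}| = (d.+1 * w.+1 ^ 2)%N.
Proof. by rewrite !card_prod !card_ord expnS expn1 mulnA. Qed.

Definition dec (r : 'I_(d.+1 * w.+1 ^ 2)) : SS := enum_val (cast_ord (esym cardS) r).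
Definition enc (z : SS) : 'I_(d.+1 * w.+1 ^ 2) := cast_ord cardS (enum_rank z).
Lemma encK : cancel enc dec.
Proof. by move=> z; rewrite /dec /enc cast_ordK enum_rankK. Qed.
Lemma decK : cancel dec enc.
Proof. by move=> r; rewrite /dec /enc enum_valK cast_ordKV. Qed.

Definition AA : array (d.+1 * w.+1 ^ 2) 5 w.+1 := fun r c => gg c (dec r).

Lemma rhoE (T : cinter 5 2 w.+1) r :
  (r \in rho AA T) = (gg T.1 (dec r) == tnth T.2 ord0) && (gg T.1.+1 (dec r) == tnth T.2 ord_max).
Proof.
have h1 : (T.1 < 4)%N by case: T => [[i hi] t].
rewrite inE; apply/forallP/andP.
- move=> H; split.
  + have := H ord0; move/forallP => H0.
    have c0 : (T.1 + 0 < 5)%N by rewrite addn0; apply: leq_trans h1 _.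
    by have := H0 (Ordinal c0); rewrite /= eqxx /= /AA /= addn0.
  + have := H ord_max; move/forallP => H0.
    have c0 : (T.1 + 1 < 5)%N by rewrite addn1.
    by have := H0 (Ordinal c0); rewrite /= eqxx /= /AA /= addn1.
- move=> [Ha Hb] [[|[|j]] hj] //; apply/forallP=> c; apply/implyP=> /eqP Hc;
    rewrite /AA Hc /=.
  + rewrite addn0 (eqP Ha); apply/eqP; congr tnth; exact: val_inj.
  + rewrite addn1 (eqP Hb); apply/eqP; congr tnth; exact: val_inj.
Qed.

Local Open Scope ring_scope.
Definition sol (i : nat) (s : 'I_d.+1) (a b : 'I_w.+1) : 'I_w.+1 * 'I_w.+1 :=
  match i with 0%N => (a, b) | 1%N => (b - sv s, a) | 2%N => (a - sv s, b - sv s)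
  | _ => (b - sv s - sv s, a - sv s) end.
Lemma L1 (i : nat) (s : 'I_d.+1) (a b : 'I_w.+1) : (i < 4)%N ->
  gg i (s, (sol i s a b).1, (sol i s a b).2) = a /\ gg i.+1 (s, (sol i s a b).1, (sol i s a b).2) = b.
Proof.
case: i => [|[|[|[|i]]]] // _ /=.
- by rewrite subrK.
- by rewrite !subrK.
- by rewrite !subrK.
Qed.

Lemma L2 (i j : nat) (z1 z2 : SS) : (i < 4)%N -> (j < 4)%N -> i <> j ->
  gg i z1 = gg i z2 -> gg i.+1 z1 = gg i.+1 z2 ->
  gg j z1 = gg j z2 -> gg j.+1 z1 = gg j.+1 z2 -> z1 = z2.
Proof.
case: z1 z2 => [[s1 x1] y1] [[s2 x2] y2] hi hj hij e1 e2 e3 e4.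
suff : (sv s1, x1, y1) = (sv s2, x2, y2).
  by case=> /sv_inj -> -> ->.
move: e1 e2 e3 e4.
case: i j hi hj hij => [|[|[|[|i]]]] [|[|[|[|j]]]] hi hj hij //=; try by case: hij.
all: move: (sv s1) (sv s2) => t1 t2 e1 e2 e3 e4.
all: repeat (match goal with
| H : ?a = ?a |- _ => clear H
| H : ?x = ?y |- _ => is_var x; is_var y; subst x
| H : ?a + ?b = ?a + ?c |- _ => move/addrI: H => H
| H : ?b + ?a = ?c + ?a |- _ => move/addIr: H => H
| H : ?a + ?b = ?c, H' : ?a + ?b + ?d = ?e |- _ => rewrite H in H'
end); by [].
Qed.
Local Close Scope ring_scope.

End Constr.

Theorem mainTheorem19 (v d : nat) :
  2 <= v -> 0 < d -> d.+1 <= v ->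
  ~ ((d == 2) && (v == 6) || (d == 4) && (v == 6)) ->
  ~ (exists u : nat, [/\ v = 6 * u, d = v - 2, u != 1 & coprime u 6]) ->
  exists A : array (d.+1 * v ^ 2) 5 v, is_optimum_CDA d 2 A.
Proof.
case: v => [|w] // _ _ hdw _ _.
have dw : d <= w by [].
exists (@AA d w); split; last by [].
have lt4 : forall T : cinter 5 2 w.+1, T.1 < 4 by case=> [[i hi] t].
split.
- move=> T; apply/set0Pn.
  have [ha hb] := @L1 d w T.1 ord0 (tnth T.2 ord0) (tnth T.2 ord_max) (lt4 T).
  exists (enc (ord0, (@sol d w T.1 ord0 (tnth T.2 ord0) (tnth T.2 ord_max)).1, (@sol d w T.1 ord0 (tnth T.2 ord0) (tnth T.2 ord_max)).2)); rewrite rhoE !encK ha hb !eqxx //.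
- move=> cT T hc; split; last first.
    by move=> HT; apply: (bigcup_sup T HT).
  move=> Hsub; case: (boolP (T \in cT)) => // HT; exfalso.
  have key : forall T' r1 r2, T' != T -> r1 \in rho (@AA d w) T -> r2 \in rho (@AA d w) T ->
      r1 \in rho (@AA d w) T' -> r2 \in rho (@AA d w) T' -> r1 = r2.
    move=> T' r1 r2 hne; rewrite !rhoE.
    move=> /andP[/eqP a1 /eqP b1] /andP[/eqP a2 /eqP b2] /andP[/eqP c1 /eqP d1] /andP[/eqP c2 /eqP d2].
    case: (eqVneq (val T'.1) (val T.1)) => h.
      move/eqP: hne; case; move: T' T h a1 b1 a2 b2 c1 d1 c2 d2 {HT Hsub}.
      move=> [i' t'] [i t] /= /val_inj -> a1 b1 _ _ c1 d1 _ _.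
      congr pair; apply: eq_from_tnth => k.
      case: k => [[|[|k]] hk] //.
        by rewrite (_ : Ordinal hk = ord0); [rewrite -a1 -c1 | exact: val_inj].
      by rewrite (_ : Ordinal hk = ord_max); [rewrite -b1 -d1 | exact: val_inj].
    apply: (can_inj (@decK d w)).
    apply: (@L2 d w dw T.1 T'.1) => //; first by apply/eqP; rewrite eq_sym.
    + by rewrite a1 a2.
    + by rewrite b1 b2.
    + by rewrite c1 c2.
    + by rewrite d1 d2.
  pose f r := odflt T [pick T' in cT | r \in rho (@AA d w) T'].
  have fP : forall r, r \in rho (@AA d w) T -> (f r \in cT) && (r \in rho (@AA d w) (f r)).
    move=> r hr; rewrite /f; case: pickP => [T' /andP[-> ->] //|].
    move=> H; have := subsetP Hsub r hr; case/bigcupP=> T' h1 h2.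
    by have := H T'; rewrite h1 h2.
  have up : #|rho (@AA d w) T| <= d.
    suff : #|rho (@AA d w) T| <= #|cT| by rewrite hc.
    rewrite -(@card_in_imset _ _ f (rho (@AA d w) T)).
      apply: subset_leq_card; apply/subsetP=> y /imsetP[r hr ->].
      by case/andP: (fP r hr).
    move=> r1 r2 h1 h2 he.
    case/andP: (fP r1 h1) => c1 e1; case/andP: (fP r2 h2) => _ e2.
    apply: (key (f r1)) => //; last by rewrite he.
    by apply: contraNneq HT => <-.
  pose F (s : 'I_d.+1) : 'I_(d.+1 * w.+1 ^ 2) :=
    let p := @sol d w T.1 s (tnth T.2 ord0) (tnth T.2 ord_max) in enc (s, p.1, p.2).
  have Finj : injective F.
    move=> s1 s2 /(congr1 (@dec d w)); rewrite /F !encK; by case.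
  have low : #|[set F s | s in 'I_d.+1]| <= #|rho (@AA d w) T|.
    apply: subset_leq_card; apply/subsetP=> y /imsetP[s _ ->].
    rewrite rhoE /F encK.
    have [-> ->] := (@L1 d w T.1 s (tnth T.2 ord0) (tnth T.2 ord_max) (lt4 T)).
    by rewrite !eqxx.
  move: low; rewrite card_imset // card_ord => low.
  by have := leq_trans low up; rewrite ltnn.
Qed.
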